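(* Let $P$ be a set of $n$ points in the plane and let $\mathcal{D}'$ be a set of closed disks with pairwise disjoint interiors such that the boundary circle of each disk in $\mathcal{D}'$ contains at least two points of $P$. Then $|\mathcal{D}'|\le n$. Moreover, this bound is tight: for every $n\ge 3$ there exist a set $P$ of $n$ points and such a family $\mathcal{D}'$ with $|\mathcal{D}'|=n$. *)

(* Defs.v *)
From Stdlib Require Import Reals List.
Import ListNotations.
Open Scope R_scope.

Definition point : Type := (R * R)%type.

(* A closed disk, given by its center and radius (radius required > 0 below). *)
Definition disk : Type := (point * R)%type.

Definition sqdist (p q : point) : R :=
  (fst p - fst q) ^ 2 + (snd p - snd q) ^ 2.

Definition on_boundary (d : disk) (p : point) : Prop :=
  sqdist p (fst d) = (snd d) ^ 2.

Definition in_interior (d : disk) (p : point) : Prop :=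
  sqdist p (fst d) < (snd d) ^ 2.

Definition admissible_family (P : list point) (D : list disk) : Prop :=
  NoDup D /\
  (forall d, In d D ->
     0 < snd d /\
     exists p q, In p P /\ In q P /\ p <> q /\ on_boundary d p /\ on_boundary d q) /\
  (forall d1 d2, In d1 D -> In d2 D -> d1 <> d2 ->
     forall z, ~ (in_interior d1 z /\ in_interior d2 z)).

(* Main.v *)
Require Import Defs.
From Stdlib Require Import Reals List Lra Lia Psatz Classical.
Import ListNotations.
Open Scope R_scope.

Lemma tangent_lemma (c1 c2 p : point) (r1 r2 : R) :
  0 < r1 -> 0 < r2 -> on_boundary (c1, r1) p -> on_boundary (c2, r2) p ->
  (forall z, ~ (in_interior (c1,r1) z /\ in_interior (c2,r2) z)) ->
  r2 * (fst c1 - fst p) + r1 * (fst c2 - fst p) = 0 /\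
  r2 * (snd c1 - snd p) + r1 * (snd c2 - snd p) = 0.
Proof.
  destruct c1 as [x1 y1], c2 as [x2 y2], p as [px py].
  unfold on_boundary, in_interior, sqdist; cbn [fst snd].
  intros H1 H2 B1 B2 Hd.
  set (a1 := x1 - px) in *. set (b1 := y1 - py) in *.
  set (a2 := x2 - px) in *. set (b2 := y2 - py) in *.
  assert (E1 : r1^2 = a1^2 + b1^2) by (unfold a1, b1; nra).
  assert (E2 : r2^2 = a2^2 + b2^2) by (unfold a2, b2; nra).
  set (wx := r2 * a1 + r1 * a2). set (wy := r2 * b1 + r1 * b2).
  destruct (classic (wx = 0 /\ wy = 0)) as [[? ?]|Hn]; [split; assumption|].
  exfalso.
  assert (HW : 0 < wx^2 + wy^2).
  { destruct (Req_dec_T wx 0).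
    - assert (wy <> 0) by tauto. nra.
    - nra. }
  set (k := r1 * r2 + a1 * a2 + b1 * b2).
  assert (HWk : wx^2 + wy^2 = 2 * r1 * r2 * k).
  { unfold wx, wy, k. nra. }
  assert (Hrr : 0 < r1 * r2) by (apply Rmult_lt_0_compat; lra).
  assert (Hk : 0 < k).
  { destruct (Rlt_or_le 0 k) as [|Hk]; [assumption|].
    assert (2 * r1 * r2 * k <= 0).
    { replace (2 * r1 * r2 * k) with (2 * (r1 * r2) * k) by ring.
      rewrite <- (Rmult_0_r (2*(r1*r2))). apply Rmult_le_compat_l; lra. }
    lra. }
  set (t := / (r1 + r2)).
  assert (Ht : 0 < t) by (unfold t; apply Rinv_0_lt_compat; lra).
  assert (Ht1 : t * (r1 + r2) = 1) by (unfold t; field; lra).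
  apply (Hd (px + t * wx, py + t * wy)); cbn [fst snd]; split.
  - replace ((px + t * wx - x1) ^ 2 + (py + t * wy - y1) ^ 2)
      with (t^2 * (wx^2+wy^2) - 2 * t * (wx * a1 + wy * b1) + (a1^2+b1^2))
      by (unfold a1, b1; ring).
    replace (wx * a1 + wy * b1) with (r1 * k)
      by (unfold wx, wy, k; nra).
    rewrite HWk, <- E1.
    assert (0 < t^2 * r1^2 * k) by (apply Rmult_lt_0_compat; [apply Rmult_lt_0_compat; apply pow_lt; lra|lra]).
    assert (Heq : t^2*(2*r1*r2*k) - 2*t*(r1*k) + r1^2 = r1^2 - 2*(t^2*r1^2*k)) by (unfold t; field; lra).
    lra.
  - replace ((px + t * wx - x2) ^ 2 + (py + t * wy - y2) ^ 2)
      with (t^2 * (wx^2+wy^2) - 2 * t * (wx * a2 + wy * b2) + (a2^2+b2^2))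
      by (unfold a2, b2; ring).
    replace (wx * a2 + wy * b2) with (r2 * k)
      by (unfold wx, wy, k; nra).
    rewrite HWk, <- E2.
    assert (0 < t^2 * r2^2 * k) by (apply Rmult_lt_0_compat; [apply Rmult_lt_0_compat; apply pow_lt; lra|lra]).
    assert (Heq : t^2*(2*r1*r2*k) - 2*t*(r2*k) + r2^2 = r2^2 - 2*(t^2*r2^2*k)) by (unfold t; field; lra).
    lra.
Qed.

Lemma three_disks (d1 d2 d3 : disk) (p : point) :
  0 < snd d1 -> 0 < snd d2 -> 0 < snd d3 ->
  on_boundary d1 p -> on_boundary d2 p -> on_boundary d3 p ->
  (forall z, ~ (in_interior d1 z /\ in_interior d2 z)) ->
  (forall z, ~ (in_interior d1 z /\ in_interior d3 z)) ->
  (forall z, ~ (in_interior d2 z /\ in_interior d3 z)) -> False.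
Proof.
  destruct d1 as [c1 r1], d2 as [c2 r2], d3 as [c3 r3]; simpl.
  intros h1 h2 h3 B1 B2 B3 D12 D13 D23.
  destruct (tangent_lemma c1 c2 p r1 r2 h1 h2 B1 B2 D12) as [ea1 eb1].
  destruct (tangent_lemma c1 c3 p r1 r3 h1 h3 B1 B3 D13) as [ea2 eb2].
  destruct (tangent_lemma c2 c3 p r2 r3 h2 h3 B2 B3 D23) as [ea3 eb3].
  assert (Hrr : 0 < r2 * r3) by (apply Rmult_lt_0_compat; lra).
  assert (A : 2 * (r2 * r3) * (fst c1 - fst p) = 0).
  { replace (2 * (r2 * r3) * (fst c1 - fst p)) with
      (r3 * (r2 * (fst c1 - fst p) + r1 * (fst c2 - fst p)) + r2 * (r3 * (fst c1 - fst p) + r1 * (fst c3 - fst p))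
       - r1 * (r3 * (fst c2 - fst p) + r2 * (fst c3 - fst p))) by ring.
    rewrite ea1, ea2, ea3; ring. }
  assert (Bq : 2 * (r2 * r3) * (snd c1 - snd p) = 0).
  { replace (2 * (r2 * r3) * (snd c1 - snd p)) with
      (r3 * (r2 * (snd c1 - snd p) + r1 * (snd c2 - snd p)) + r2 * (r3 * (snd c1 - snd p) + r1 * (snd c3 - snd p))
       - r1 * (r3 * (snd c2 - snd p) + r2 * (snd c3 - snd p))) by ring.
    rewrite eb1, eb2, eb3; ring. }
  apply Rmult_integral in A; destruct A as [A|A]; [lra|].
  apply Rmult_integral in Bq; destruct Bq as [Bq|Bq]; [lra|].
  unfold on_boundary, sqdist in B1; cbn [fst snd] in B1. replace (fst p - fst c1) with (-(fst c1 - fst p)) in B1 by ring. replace (snd p - snd c1) with (-(snd c1 - snd p)) in B1 by ring.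
  rewrite A, Bq in B1. assert (r1 ^ 2 > 0) by (apply pow_lt; lra). lra.
Qed.

Fixpoint sumn {A} (f : A -> nat) (l : list A) : nat :=
  match l with [] => 0%nat | x :: l' => (f x + sumn f l')%nat end.

Definition ind (b : bool) : nat := if b then 1%nat else 0%nat.

Lemma sumn_ind {A} (f : A -> bool) l : sumn (fun x => ind (f x)) l = length (filter f l).
Proof. induction l; simpl; auto. destruct (f a); simpl; auto. Qed.

Lemma sumn_add {A} (f g : A -> nat) l : sumn (fun x => f x + g x)%nat l = (sumn f l + sumn g l)%nat.
Proof. induction l; simpl; lia. Qed.

Lemma double_count {A B} (b : A -> B -> bool) l1 l2 :
  sumn (fun x => sumn (fun y => ind (b x y)) l2) l1 =
  sumn (fun y => sumn (fun x => ind (b x y)) l1) l2.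
Proof.
  induction l1; simpl.
  - induction l2; simpl; auto.
  - rewrite IHl1. rewrite sumn_add. reflexivity.
Qed.

Lemma sumn_lower {A} (f : A -> nat) k l : (forall x, In x l -> k <= f x)%nat -> (k * length l <= sumn f l)%nat.
Proof.
  induction l; simpl; intros H; [lia|].
  specialize (IHl (fun x Hx => H x (or_intror Hx))). specialize (H a (or_introl eq_refl)). lia.
Qed.

Lemma sumn_upper {A} (f : A -> nat) k l : (forall x, In x l -> f x <= k)%nat -> (sumn f l <= k * length l)%nat.
Proof.
  induction l; simpl; intros H; [lia|].
  specialize (IHl (fun x Hx => H x (or_intror Hx))). specialize (H a (or_introl eq_refl)). lia.
Qed.

Definition ob (d : disk) (p : point) : bool :=
  if Req_dec_T (sqdist p (fst d)) ((snd d) ^ 2) then true else false.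

Lemma ob_spec d p : ob d p = true <-> on_boundary d p.
Proof. unfold ob, on_boundary. destruct Req_dec_T; split; congruence. Qed.

Lemma part1 (P : list point) (D : list disk) :
  NoDup P -> admissible_family P D -> (length D <= length P)%nat.
Proof.
  intros HP [HD [Hdisk Hdis]].
  assert (L : (2 * length D <= sumn (fun d => sumn (fun p => ind (ob d p)) P) D)%nat).
  { apply sumn_lower. intros d Hd. rewrite sumn_ind.
    destruct (Hdisk d Hd) as [_ [p [q [Hp [Hq [Hpq [Bp Bq]]]]]]].
    assert (Ip : In p (filter (ob d) P)) by (apply filter_In; split; [auto|apply ob_spec; auto]).
    assert (Iq : In q (filter (ob d) P)) by (apply filter_In; split; [auto|apply ob_spec; auto]).
    destruct (filter (ob d) P) as [|x [|y l]]; simpl in *; try tauto.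
    - exfalso. destruct Ip, Iq; try tauto. congruence.
    - lia. }
  assert (U : (sumn (fun p => sumn (fun d => ind (ob d p)) D) P <= 2 * length P)%nat).
  { apply sumn_upper. intros p Hp. rewrite (sumn_ind (fun d => ob d p)).
    pose proof (NoDup_filter (fun d => ob d p) HD) as ND.
    assert (Hin : forall d, In d (filter (fun d => ob d p) D) -> In d D /\ on_boundary d p).
    { intros d Hd. apply filter_In in Hd. destruct Hd. split; auto. apply ob_spec; auto. }
    destruct (filter (fun d => ob d p) D) as [|x [|y [|z l]]]; simpl; try lia.
    exfalso.
    destruct (Hin x ltac:(simpl; auto)) as [Ix Bx].
    destruct (Hin y ltac:(simpl; auto)) as [Iy By].
    destruct (Hin z ltac:(simpl; auto)) as [Iz Bz].
    inversion ND as [|? ? Nx ND1]; subst. inversion ND1 as [|? ? Ny ND2]; subst.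
    assert (x <> y) by (intro; subst; simpl in Nx; tauto).
    assert (x <> z) by (intro; subst; simpl in Nx; tauto).
    assert (y <> z) by (intro; subst; simpl in Ny; tauto).
    apply (three_disks x y z p); try (apply Hdisk; auto); auto. }
  rewrite double_count in L. lia.
Qed.

Definition sep (d1 d2 : disk) : Prop :=
  0 < snd d1 /\ 0 < snd d2 /\ (snd d1 + snd d2)^2 <= sqdist (fst d1) (fst d2).

Lemma sep_sym d1 d2 : sep d1 d2 -> sep d2 d1.
Proof.
  unfold sep, sqdist. intros [h1 [h2 h3]]. repeat split; try lra.
Qed.

Lemma sep_irrefl d : ~ sep d d.
Proof. unfold sep, sqdist. intros [h1 [_ h3]]. assert (0 < (snd d + snd d)^2) by (apply pow_lt; lra). nra. Qed.

Lemma sep_disjoint d1 d2 : sep d1 d2 -> forall z, ~ (in_interior d1 z /\ in_interior d2 z).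
Proof.
  destruct d1 as [[x1 y1] r1], d2 as [[x2 y2] r2].
  unfold sep, in_interior, sqdist; cbn [fst snd].
  intros [h1 [h2 h3]] [zx zy] [i1 i2]; cbn [fst snd] in *.
  set (ux := zx - x1) in *. set (uy := zy - y1) in *.
  set (wx := x2 - zx). set (wy := y2 - zy).
  assert (i2' : wx^2 + wy^2 < r2^2) by (unfold wx, wy; nra).
  assert (e : (x1 - x2)^2 + (y1 - y2)^2 = (ux^2+uy^2) + (wx^2+wy^2) + 2*(ux*wx+uy*wy))
    by (unfold ux, uy, wx, wy; ring).
  assert (cs : (ux*wx+uy*wy)^2 <= (ux^2+uy^2)*(wx^2+wy^2)).
  { assert (0 <= (ux*wy - uy*wx)^2) by apply pow2_ge_0. nra. }
  assert (p1 : (ux^2+uy^2)*(wx^2+wy^2) < (r1*r2)^2).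
  { assert (0 <= ux^2+uy^2) by nra. assert (0 <= wx^2+wy^2) by nra.
    replace ((r1*r2)^2) with (r1^2*r2^2) by ring.
    apply Rle_lt_trans with ((ux^2+uy^2)*r2^2).
    - apply Rmult_le_compat_l; lra.
    - apply Rmult_lt_compat_r; [apply pow_lt; lra | lra]. }
  assert (dot : ux*wx+uy*wy < r1*r2).
  { destruct (Rle_or_lt (ux*wx+uy*wy) 0) as [h|h].
    - assert (0 < r1*r2) by (apply Rmult_lt_0_compat; lra). lra.
    - assert (0 < r1 * r2) by (apply Rmult_lt_0_compat; lra). nra. }
  nra.
Qed.

Definition Good {A} (R : A -> A -> Prop) (l : list A) : Prop :=
  NoDup l /\ forall x y, In x l -> In y l -> x <> y -> R x y.

Lemma good_app {A} (R : A -> A -> Prop) l1 l2 :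
  (forall x y, R x y -> R y x) -> (forall x, ~ R x x) ->
  Good R l1 -> Good R l2 -> (forall x y, In x l1 -> In y l2 -> R x y) -> Good R (l1 ++ l2).
Proof.
  intros Hs Hi [N1 P1] [N2 P2] C. split.
  - apply NoDup_app; auto. intros x I1 I2. apply (Hi x). apply C; auto.
  - intros x y Ix Iy Hxy. apply in_app_iff in Ix, Iy.
    destruct Ix, Iy; auto.
Qed.

Lemma good_map_seq {A} (R : A -> A -> Prop) (f : nat -> A) s n :
  (forall x, ~ R x x) ->
  (forall i j, (s <= i < s + n)%nat -> (s <= j < s + n)%nat -> i <> j -> R (f i) (f j)) ->
  Good R (map f (seq s n)).
Proof.
  intros Hi H. split.
  - apply NoDup_map_NoDup_ForallPairs; [|apply seq_NoDup].
    intros i j Ii Ij E. apply in_seq in Ii, Ij.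
    destruct (Nat.eq_dec i j); auto. exfalso. apply (Hi (f i)).
    rewrite E at 2. apply H; auto.
  - intros x y Ix Iy Hxy. apply in_map_iff in Ix as [i [<- Ii]]. apply in_map_iff in Iy as [j [<- Ij]].
    apply in_seq in Ii, Ij. apply H; auto.
Qed.

Lemma good_single {A} (R : A -> A -> Prop) (x : A) : Good R [x].
Proof. split. constructor; [simpl; tauto|constructor]. intros a b [<-|[]] [<-|[]]; tauto. Qed.

Lemma good_nil {A} (R : A -> A -> Prop) : Good R [].
Proof. split. constructor. intros a b []. Qed.

Lemma nat_sep (i j : nat) : i <> j -> 1 <= (INR i - INR j)^2.
Proof.
  intros H. destruct (Nat.lt_total i j) as [h|[h|h]]; [|tauto|].
  - pose proof (le_INR (S i) j ltac:(lia)) as H0. rewrite S_INR in H0.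
    assert (INR i - INR j <= -1) by lra. nra.
  - pose proof (le_INR (S j) i ltac:(lia)) as H0. rewrite S_INR in H0.
    assert (1 <= INR i - INR j) by lra. nra.
Qed.

Definition T (k : nat) : disk := ((2 * INR k, 0), 1).
Definition Bd (k : nat) : disk := ((2 * INR k, -2), 1).
Definition Er (a : nat) : disk := ((2 * INR a + 4/3, -1), 2/3).
Definition El : disk := ((-4/3, -1), 2/3).
Definition pt (k : nat) : point := (2 * INR k + 1, 0).
Definition pb (k : nat) : point := (2 * INR k + 1, -2).
Definition qr1 (a : nat) : point := (2 * INR a + 4/5, -3/5).
Definition qr2 (a : nat) : point := (2 * INR a + 4/5, -7/5).
Definition ql1 : point := (-4/5, -3/5).
Definition ql2 : point := (-4/5, -7/5).
Definition q0 : point := (0, -1).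

Definition Pts (a : nat) (b : bool) : list point :=
  map pt (seq 0 a) ++ map pb (seq 0 a) ++ [qr1 a; qr2 a] ++ (if b then [ql1; ql2] else [q0]).
Definition Dks (a : nat) (b : bool) : list disk :=
  map T (seq 0 (S a)) ++ map Bd (seq 0 (S a)) ++ [Er a] ++ (if b then [El] else []).

Ltac sepsolve := unfold sep, T, Bd, Er, El, sqdist; cbn [fst snd]; split; [lra|split; [lra|]].

Lemma sep_TT i j : i <> j -> sep (T i) (T j).
Proof. intros h. pose proof (nat_sep i j h). sepsolve.
  replace ((2 * INR i - 2 * INR j) ^ 2 + (0 - 0) ^ 2) with (4 * (INR i - INR j)^2) by ring. lra. Qed.
Lemma sep_BB i j : i <> j -> sep (Bd i) (Bd j).
Proof. intros h. pose proof (nat_sep i j h). sepsolve.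
  replace ((2 * INR i - 2 * INR j) ^ 2 + (-2 - -2) ^ 2) with (4 * (INR i - INR j)^2) by ring. lra. Qed.
Lemma sep_TB i j : sep (T i) (Bd j).
Proof. sepsolve. pose proof (pow2_ge_0 (2*INR i - 2*INR j)); lra. Qed.
Lemma sep_TEr i a : (i <= a)%nat -> sep (T i) (Er a).
Proof. intros h. apply le_INR in h. sepsolve. nra. Qed.
Lemma sep_BEr i a : (i <= a)%nat -> sep (Bd i) (Er a).
Proof. intros h. apply le_INR in h. sepsolve. nra. Qed.
Lemma sep_TEl i : sep (T i) El.
Proof. pose proof (pos_INR i). sepsolve. nra. Qed.
Lemma sep_BEl i : sep (Bd i) El.
Proof. pose proof (pos_INR i). sepsolve. nra. Qed.
Lemma sep_ErEl a : sep (Er a) El.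
Proof. pose proof (pos_INR a). sepsolve. nra. Qed.

Lemma Dks_good a b : Good sep (Dks a b).
Proof.
  unfold Dks.
  assert (Hs := sep_sym). assert (Hi := sep_irrefl).
  apply good_app; auto.
  - apply good_map_seq; auto. intros; apply sep_TT; auto.
  - apply good_app; auto.
    + apply good_map_seq; auto. intros; apply sep_BB; auto.
    + apply good_app; auto.
      * apply good_single.
      * destruct b; [apply good_single|apply good_nil].
      * intros x y [<-|[]] Iy. destruct b; simpl in Iy; [|tauto].
        destruct Iy as [<-|[]]. apply sep_ErEl.
    + intros x y Ix Iy. apply in_map_iff in Ix as [i [<- Ii]]. apply in_seq in Ii.
      apply in_app_iff in Iy as [Iy|Iy].
      * destruct Iy as [<-|[]]. apply sep_BEr. lia.
      * destruct b; simpl in Iy; [|tauto]. destruct Iy as [<-|[]]. apply sep_BEl.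
  - intros x y Ix Iy. apply in_map_iff in Ix as [i [<- Ii]]. apply in_seq in Ii.
    apply in_app_iff in Iy as [Iy|Iy].
    + apply in_map_iff in Iy as [j [<- _]]. apply sep_TB.
    + apply in_app_iff in Iy as [Iy|Iy].
      * destruct Iy as [<-|[]]. apply sep_TEr. lia.
      * destruct b; simpl in Iy; [|tauto]. destruct Iy as [<-|[]]. apply sep_TEl.
Qed.

Ltac neqsolve := let E := fresh in intro E; injection E; intros; try (pose proof (pos_INR 0)); lra.

Lemma Pts_nodup a b : NoDup (Pts a b).
Proof.
  assert (Hs : forall x y : point, x <> y -> y <> x) by auto.
  assert (Hi : forall x : point, ~ x <> x) by auto.
  cut (Good (fun x y : point => x <> y) (Pts a b)); [intros [h _]; exact h|].
  unfold Pts.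
  apply good_app; auto.
  - apply good_map_seq; auto. intros i j _ _ h E. apply (nat_sep i j) in h.
    unfold pt in E. injection E as E1. assert (Eq : INR i = INR j) by lra. rewrite Eq in h. lra.
  - apply good_app; auto.
    + apply good_map_seq; auto. intros i j _ _ h E. apply (nat_sep i j) in h.
      unfold pb in E. injection E as E1. assert (Eq : INR i = INR j) by lra. rewrite Eq in h. lra.
    + apply good_app; auto.
      * split. constructor; [simpl; intros [E|[]]; revert E; unfold qr1, qr2; neqsolve|].
        constructor; [simpl; tauto|constructor]. intros; assumption.
      * destruct b; [|apply good_single]. split.
        constructor; [simpl; intros [E|[]]; revert E; unfold ql1, ql2; neqsolve|].
        constructor; [simpl; tauto|constructor]. intros; assumption.
      * intros x y Ix Iy. pose proof (pos_INR a).
        destruct b; simpl in Iy; destruct Ix as [<-|[<-|[]]];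
          repeat (destruct Iy as [<-|Iy]); try tauto;
          unfold qr1, qr2, ql1, ql2, q0; neqsolve.
    + intros x y Ix Iy. apply in_map_iff in Ix as [i [<- Ii]].
      apply in_app_iff in Iy as [Iy|Iy].
      * destruct Iy as [<-|[<-|[]]]; unfold pb, qr1, qr2; neqsolve.
      * destruct b; simpl in Iy; repeat (destruct Iy as [<-|Iy]); try tauto;
          unfold pb, ql1, ql2, q0; neqsolve.
  - intros x y Ix Iy. apply in_map_iff in Ix as [i [<- Ii]].
    apply in_app_iff in Iy as [Iy|Iy].
    + apply in_map_iff in Iy as [j [<- _]]. unfold pt, pb; neqsolve.
    + apply in_app_iff in Iy as [Iy|Iy].
      * destruct Iy as [<-|[<-|[]]]; unfold pt, qr1, qr2; neqsolve.
      * destruct b; simpl in Iy; repeat (destruct Iy as [<-|Iy]); try tauto;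
          unfold pt, ql1, ql2, q0; neqsolve.
Qed.

Lemma in_pt a b k : (k < a)%nat -> In (pt k) (Pts a b).
Proof. intros h. unfold Pts. apply in_app_iff; left. apply in_map. apply in_seq. lia. Qed.
Lemma in_pb a b k : (k < a)%nat -> In (pb k) (Pts a b).
Proof. intros h. unfold Pts. apply in_app_iff; right. apply in_app_iff; left. apply in_map. apply in_seq. lia. Qed.
Lemma in_qr1 a b : In (qr1 a) (Pts a b).
Proof. unfold Pts. rewrite !in_app_iff. simpl. tauto. Qed.
Lemma in_qr2 a b : In (qr2 a) (Pts a b).
Proof. unfold Pts. rewrite !in_app_iff. simpl. tauto. Qed.
Lemma in_ql1 a : In ql1 (Pts a true).
Proof. unfold Pts. rewrite !in_app_iff. simpl. tauto. Qed.
Lemma in_ql2 a : In ql2 (Pts a true).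
Proof. unfold Pts. rewrite !in_app_iff. simpl. tauto. Qed.
Lemma in_q0 a : In q0 (Pts a false).
Proof. unfold Pts. rewrite !in_app_iff. simpl. tauto. Qed.

Ltac obsolve := unfold on_boundary, sqdist, T, Bd, Er, El, pt, pb, qr1, qr2, ql1, ql2, q0; cbn [fst snd];
  try rewrite S_INR; try rewrite INR_0; field.

Definition two_pts (P : list point) (d : disk) : Prop :=
  exists p q, In p P /\ In q P /\ p <> q /\ on_boundary d p /\ on_boundary d q.

Ltac pick p q := exists p, q; split; [|split; [|split; [|split]]].

Lemma T_two a b k : (k <= a)%nat -> two_pts (Pts a b) (T k).
Proof.
  intros hk. pose proof (pos_INR k) as hp.
  destruct (Nat.eq_dec k a) as [ek|ek].
  - subst k. destruct a as [|a'].
    + destruct b.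
      * pick ql1 (qr1 0); [apply in_ql1|apply in_qr1| |obsolve|obsolve].
        unfold ql1, qr1; rewrite INR_0; neqsolve.
      * pick q0 (qr1 0); [apply in_q0|apply in_qr1| |obsolve|obsolve].
        unfold q0, qr1; rewrite INR_0; neqsolve.
    + pick (pt a') (qr1 (S a')); [apply in_pt; lia|apply in_qr1| |obsolve|obsolve].
      unfold pt, qr1; neqsolve.
  - destruct k as [|k'].
    + destruct b.
      * pick ql1 (pt 0); [apply in_ql1|apply in_pt; lia| |obsolve|obsolve].
        unfold ql1, pt; rewrite INR_0; neqsolve.
      * pick q0 (pt 0); [apply in_q0|apply in_pt; lia| |obsolve|obsolve].
        unfold q0, pt; rewrite INR_0; neqsolve.
    + pick (pt k') (pt (S k')); [apply in_pt; lia|apply in_pt; lia| |obsolve|obsolve].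
      unfold pt; rewrite S_INR; neqsolve.
Qed.

Lemma B_two a b k : (k <= a)%nat -> two_pts (Pts a b) (Bd k).
Proof.
  intros hk. pose proof (pos_INR k) as hp.
  destruct (Nat.eq_dec k a) as [ek|ek].
  - subst k. destruct a as [|a'].
    + destruct b.
      * pick ql2 (qr2 0); [apply in_ql2|apply in_qr2| |obsolve|obsolve].
        unfold ql2, qr2; rewrite INR_0; neqsolve.
      * pick q0 (qr2 0); [apply in_q0|apply in_qr2| |obsolve|obsolve].
        unfold q0, qr2; rewrite INR_0; neqsolve.
    + pick (pb a') (qr2 (S a')); [apply in_pb; lia|apply in_qr2| |obsolve|obsolve].
      unfold pb, qr2; neqsolve.
  - destruct k as [|k'].
    + destruct b.
      * pick ql2 (pb 0); [apply in_ql2|apply in_pb; lia| |obsolve|obsolve].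
        unfold ql2, pb; rewrite INR_0; neqsolve.
      * pick q0 (pb 0); [apply in_q0|apply in_pb; lia| |obsolve|obsolve].
        unfold q0, pb; rewrite INR_0; neqsolve.
    + pick (pb k') (pb (S k')); [apply in_pb; lia|apply in_pb; lia| |obsolve|obsolve].
      unfold pb; rewrite S_INR; neqsolve.
Qed.

Lemma Er_two a b : two_pts (Pts a b) (Er a).
Proof.
  pick (qr1 a) (qr2 a); [apply in_qr1|apply in_qr2| |obsolve|obsolve].
  unfold qr1, qr2; neqsolve.
Qed.

Lemma El_two a : two_pts (Pts a true) El.
Proof.
  pick ql1 ql2; [apply in_ql1|apply in_ql2| |obsolve|obsolve].
  unfold ql1, ql2; neqsolve.
Qed.

Lemma construction a b : admissible_family (Pts a b) (Dks a b).
Proof.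
  destruct (Dks_good a b) as [ND PW].
  split; [exact ND|split].
  - intros d Hd. unfold Dks in Hd. rewrite !in_app_iff in Hd.
    destruct Hd as [Hd|[Hd|[Hd|Hd]]].
    + apply in_map_iff in Hd as [k [<- Ik]]. apply in_seq in Ik.
      split; [unfold T; simpl; lra|]. apply T_two; lia.
    + apply in_map_iff in Hd as [k [<- Ik]]. apply in_seq in Ik.
      split; [unfold Bd; simpl; lra|]. apply B_two; lia.
    + destruct Hd as [<-|[]]. split; [unfold Er; simpl; lra|]. apply Er_two.
    + destruct b; simpl in Hd; [|tauto]. destruct Hd as [<-|[]].
      split; [unfold El; simpl; lra|]. apply El_two.
  - intros d1 d2 I1 I2 ne. apply sep_disjoint. apply PW; auto.
Qed.

Lemma lengths a b : length (Pts a b) = (2 * a + (if b then 4 else 3))%nat /\ length (Dks a b) = (2 * a + (if b then 4 else 3))%nat.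
Proof.
  unfold Pts, Dks. rewrite !app_length, !map_length, !seq_length.
  destruct b; simpl; lia.
Qed.

Lemma part2 (n : nat) : (3 <= n)%nat ->
  exists (P : list point) (D : list disk),
    NoDup P /\ length P = n /\ admissible_family P D /\ length D = n.
Proof.
  intros hn. destruct (Nat.Even_or_Odd n) as [[m hm]|[m hm]].
  - exists (Pts (m-2) true), (Dks (m-2) true).
    destruct (lengths (m-2) true) as [l1 l2].
    split; [apply Pts_nodup|split; [lia|split; [apply construction|lia]]].
  - exists (Pts (m-1) false), (Dks (m-1) false).
    destruct (lengths (m-1) false) as [l1 l2].
    split; [apply Pts_nodup|split; [lia|split; [apply construction|lia]]].
Qed.

Theorem mainTheorem12 :
  (forall (P : list point) (D : list disk),
      NoDup P -> admissible_family P D -> (length D <= length P)%nat) /\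
  (forall n : nat, (3 <= n)%nat ->
      exists (P : list point) (D : list disk),
        NoDup P /\ length P = n /\ admissible_family P D /\ length D = n).
Proof.
  split; [exact part1 | exact part2].
Qed.
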